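(* Let $\mathbb{K}$ be any field and $n\geq 3$. Let $S$ be a linear subspace of $\mathrm{S}_n(\mathbb{K})$ in which every matrix has rank at most $2$. For $M\in S$ let $P(M)\in\mathrm{S}_{n-1}(\mathbb{K})$ be the upper-left $(n-1)\times(n-1)$ submatrix of $M$. Assume that $P(S)\subset\mathrm{WS}_{n-1,1,0}(\mathbb{K})$ and $\dim P(S)>2$. Then $S$ is congruent to a subspace of $\mathrm{WS}_{n,1,0}(\mathbb{K})$.
   Context: $\mathrm{S}_p(\mathbb{K})$ denotes the $p\times p$ symmetric matrices. $\mathrm{WS}_{p,1,0}(\mathbb{K})$ is the space of $M=(m_{i,j})\in\mathrm{S}_p(\mathbb{K})$ with $m_{i,j}=0$ whenever $i>1$ and $j>1$. Subsets $\mathcal{V},\mathcal{W}$ of $\mathrm{M}_n(\mathbb{K})$ are congruent if $\mathcal{V}=Q\mathcal{W}Q^T$ for some $Q\in\mathrm{GL}_n(\mathbb{K})$. *)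

(* Defs.v *)
From HB Require Import structures.
From mathcomp Require Import all_boot all_order all_algebra.
Set Implicit Arguments. Unset Strict Implicit. Unset Printing Implicit Defensive.
Import GRing.Theory.
Local Open Scope ring_scope.

Definition symmx (F : fieldType) (p : nat) (M : 'M[F]_p) : bool := M^T == M.

(* WS_{p,1,0}(K): symmetric M with m_{i,j} = 0 whenever i > 1 and j > 1
   (1-based indices); with 0-based ordinals: i <> 0 and j <> 0. *)
Definition WS10 (F : fieldType) (p : nat) (M : 'M[F]_p) : bool :=
  symmx M && [forall i : 'I_p, forall j : 'I_p,
                 ((0 < (i : nat))%N && (0 < (j : nat))%N) ==> (M i j == 0)].

Definition ulsub (F : fieldType) (m : nat) (M : 'M[F]_m.+1) : 'M[F]_m :=
  \matrix_(i < m, j < m) M (widen_ord (leqnSn m) i) (widen_ord (leqnSn m) j).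

Lemma ulsub_is_linear (F : fieldType) (m : nat) : linear (@ulsub F m).
Proof. by move=> a A B; apply/matrixP=> i j; rewrite !mxE. Qed.

HB.instance Definition _ (F : fieldType) (m : nat) :=
  GRing.isLinear.Build F 'M[F]_m.+1 'M[F]_m _ (@ulsub F m) (@ulsub_is_linear F m).

Definition Pimg (F : fieldType) (m : nat) (S : {vspace 'M[F]_m.+1}) : {vspace 'M[F]_m} :=
  (linfun (@ulsub F m) @: S)%VS.

(* Main.v *)
Require Import Defs.
From mathcomp Require Import all_boot all_order all_algebra.
From mathcomp Require Import ring.
From Stdlib Require Import Classical.
Local Open Scope ring_scope.
Import GRing.Theory.
Lemma det3 (F : fieldType) (A : 'M[F]_3) : \det A =
  A 0 0 * (A 1 1 * A 2 2 - A 1 2 * A 2 1) - A 0 1 * (A 1 0 * A 2 2 - A 1 2 * A 2 0)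
  + A 0 2 * (A 1 0 * A 2 1 - A 1 1 * A 2 0).
Proof.
rewrite (expand_det_row _ ord0) !big_ord_recl big_ord0 /cofactor.
rewrite !(expand_det_row _ ord0) !big_ord_recl !big_ord0 /cofactor.
rewrite !(expand_det_row _ ord0) !big_ord_recl !big_ord0 /cofactor.
rewrite !det_mx00 !mxE /=.
pose B := fun i j : nat => A (inord i) (inord j).
have HB : forall i j, A i j = B i j by move=> i j; rewrite /B !inord_val.
rewrite !HB /bump /=.
change (1 %% 3)%N with 1%N; change ((1 %% 3 + 1 %% 3) %% 3)%N with 2%N.
ring.
Qed.

Lemma minor3 (F : fieldType) n (M : 'M[F]_n) (r0 r1 r2 c0 c1 c2 : 'I_n) :
  (\rank M <= 2)%N ->
  M r0 c0 * (M r1 c1 * M r2 c2 - M r1 c2 * M r2 c1)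
  - M r0 c1 * (M r1 c0 * M r2 c2 - M r1 c2 * M r2 c0)
  + M r0 c2 * (M r1 c0 * M r2 c1 - M r1 c1 * M r2 c0) = 0.
Proof.
move=> hr.
pose f := fun i : 'I_3 => nth r0 [:: r0; r1; r2] i.
pose g := fun i : 'I_3 => nth c0 [:: c0; c1; c2] i.
have hA : (\rank (mxsub f g M) <= 2)%N.
  rewrite mxsubrc; apply: leq_trans (mxrankS (rowsub_sub _ _)) _.
  rewrite -[M]mulmx1 -mulmx_colsub; apply: leq_trans (mxrankM_maxl _ _) _.
  by [].
have : \det (mxsub f g M) = 0.
  apply/eqP; apply: contraTT hA => hd.
  have hu : mxsub f g M \in unitmx by rewrite unitmxE unitfE.
  by rewrite (mxrank_unit hu).
rewrite det3 !mxE /f /g /=.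
change (1 %% 3)%N with 1%N; change ((1 %% 3 + 1 %% 3) %% 3)%N with 2%N.
by [].
Qed.

Lemma dl (F : fieldType) n (a b i j : 'I_n) (A : 'M[F]_n) :
  (delta_mx a b *m A) i j = (i == a)%:R * A b j.
Proof.
rewrite mxE (bigD1 b) //= big1 ?addr0 => [|k hk]; rewrite !mxE ?eqxx ?andbT //.
by rewrite (negbTE hk) andbF mul0r.
Qed.

Lemma dr (F : fieldType) n (a b i j : 'I_n) (A : 'M[F]_n) :
  (A *m delta_mx a b) i j = A i a * (j == b)%:R.
Proof.
rewrite mxE (bigD1 a) //= big1 ?addr0 => [|k hk]; rewrite !mxE ?eqxx //.
by rewrite (negbTE hk) mulr0.
Qed.

Lemma dlm (F : fieldType) n (a b : 'I_n) (A : 'M[F]_n) :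
  delta_mx a b *m A = \matrix_(i, j) ((i == a)%:R * A b j).
Proof. by apply/matrixP => i j; rewrite dl mxE. Qed.

Lemma drm (F : fieldType) n (a b : 'I_n) (A : 'M[F]_n) :
  A *m delta_mx a b = \matrix_(i, j) (A i a * (j == b)%:R).
Proof. by apply/matrixP => i j; rewrite dr mxE. Qed.

Lemma congr_entry (F : fieldType) n (M : 'M[F]_n) (a b : 'I_n) lam (i j : 'I_n) :
  ((1%:M - lam *: delta_mx a b) *m M *m (1%:M - lam *: delta_mx a b)^T) i j =
  M i j - lam * (i == a)%:R * M b j - lam * (j == a)%:R * M i b
  + lam * lam * (i == a)%:R * (j == a)%:R * M b b.
Proof.
have -> : (1%:M - lam *: delta_mx a b)^T = 1%:M - lam *: delta_mx b a :> 'M[F]_n.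
  by apply/matrixP => x y; rewrite !mxE eq_sym andbC.
rewrite !mulmxBr !mulmxBl !mul1mx !mulmx1 -!scalemxAl -!scalemxAr.
rewrite !dlm !drm !mxE.
ring.
Qed.

Lemma unitQ (F : fieldType) n (a b : 'I_n) (lam : F) :
  a != b -> (1%:M - lam *: delta_mx a b) \in unitmx.
Proof.
move=> hab.
have h : (1%:M - lam *: delta_mx a b) *m (1%:M + lam *: delta_mx a b) = 1%:M :> 'M[F]_n.
  rewrite mulmxDr mulmx1 mulmxBl mul1mx -scalemxAl -scalemxAr dlm.
  apply/matrixP => i j; rewrite !mxE [b == a]eq_sym (negbTE hab) /=.
  ring.
by case: (mulmx1_unit h).
Qed.

Lemma eq0_by {F : fieldType} {x u : F} : u = 0 -> x = - u -> x = 0.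
Proof. by move=> -> ->; rewrite oppr0. Qed.

Lemma lc1 {F : fieldType} {x y u v a : F} : u = v -> x - y = a * (u - v) -> x = y.
Proof. by move=> -> /eqP; rewrite subrr mulr0 subr_eq0 => /eqP. Qed.

Lemma lc2 {F : fieldType} {x y u v p q a c : F} : u = v -> p = q ->
  x - y = a * (u - v) + c * (p - q) -> x = y.
Proof. by move=> -> -> /eqP; rewrite !subrr !mulr0 addr0 subr_eq0 => /eqP. Qed.

Lemma lc3 {F : fieldType} {x y u v p q r s a c e : F} : u = v -> p = q -> r = s ->
  x - y = a * (u - v) + c * (p - q) + e * (r - s) -> x = y.
Proof. by move=> -> -> -> /eqP; rewrite !subrr !mulr0 !addr0 subr_eq0 => /eqP. Qed.

Definition wd {m} (i : 'I_m) : 'I_m.+1 := widen_ord (leqnSn m) i.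
Definition bv {F : fieldType} {m} (M : 'M[F]_m.+1) (i : 'I_m) := M ord0 (wd i).
Definition dv {F : fieldType} {m} (M : 'M[F]_m.+1) (i : 'I_m) := M ord_max (wd i).

Theorem lemma4p7 (F : fieldType) (m : nat) (S : {vspace 'M[F]_m.+1}) :
  (3 <= m.+1)%N ->
  (forall M, M \in S -> symmx M) ->
  (forall M, M \in S -> (\rank M <= 2)%N) ->
  (forall N, N \in Pimg S -> WS10 N) ->
  (2 < \dim (Pimg S))%N ->
  exists2 Q : 'M[F]_m.+1, Q \in unitmx &
    forall M, M \in S -> WS10 (Q *m M *m Q^T).
Proof.
move=> hm hsym hrk hP hdim.
have m_gt0 : (0 < m)%N by rewrite -ltnS (leq_trans _ hm).
pose o : 'I_m := Ordinal m_gt0.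
have Hsym : forall M, M \in S -> forall i j, M i j = M j i.
  by move=> M /hsym /eqP hM i j; rewrite -{1}hM mxE.
have Hmid : forall M, M \in S -> forall i j : 'I_m, (0 < i)%N -> (0 < j)%N ->
    M (wd i) (wd j) = 0.
  move=> M hM i j hi hj.
  have := hP _ (memv_img (linfun (@ulsub F m)) hM).
  rewrite lfunE /= => /andP [_ /forallP /(_ i) /forallP /(_ j)].
  by rewrite hi hj /= mxE => /eqP.
have Hwl : forall i : 'I_m, (wd i == ord_max) = false.
  by move=> i; rewrite -val_eqE /= ltn_eqF.
have Hsplit : forall i : 'I_m.+1, i != ord_max -> exists i' : 'I_m, i = wd i'.
  move=> i; rewrite -val_eqE /= => hi.
  have hlt : (i < m)%N by rewrite ltn_neqAle hi -ltnS ltn_ord.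
  by exists (Ordinal hlt); apply: val_inj.
have Hz : forall i : 'I_m, (i : nat) = 0%N -> wd i = ord0.
  by move=> i hi; apply: val_inj.
have Ho : forall i : 'I_m, (i == o) = ((i : nat) == 0%N).
  by move=> i; rewrite -val_eqE.
have Q1 : forall M, M \in S -> forall i j : 'I_m, (0 < i)%N -> (0 < j)%N ->
    bv M i * dv M j = bv M j * dv M i.
  move=> M hM i j hi hj.
  have key : forall k : 'I_m, (0 < k)%N ->
      bv M k * (bv M i * dv M j - bv M j * dv M i) = 0.
    move=> k hk.
    have := minor3 _ _ _ ord0 (wd i) (wd j) ord0 (wd k) ord_max (hrk M hM).
    rewrite (Hmid M hM i k hi hk) (Hmid M hM j k hj hk) (Hsym M hM (wd i) ord0)
      (Hsym M hM (wd j) ord0) (Hsym M hM (wd i) ord_max) (Hsym M hM (wd j) ord_max) => h.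
    by apply: (eq0_by h); rewrite /bv /dv; ring.
  have [hbi|hbi] := eqVneq (bv M i) 0.
    have [hbj|hbj] := eqVneq (bv M j) 0; first by rewrite hbi hbj !mul0r.
    by have /eqP := key j hj; rewrite mulf_eq0 (negbTE hbj) /= subr_eq0 => /eqP.
  by have /eqP := key i hi; rewrite mulf_eq0 (negbTE hbi) /= subr_eq0 => /eqP.
have Q2 : forall M N, M \in S -> N \in S -> forall i j : 'I_m, (0 < i)%N -> (0 < j)%N ->
    bv M i * dv N j + bv N i * dv M j = bv M j * dv N i + bv N j * dv M i.
  move=> M N hM hN i j hi hj.
  have h := Q1 _ (memvD hM hN) i j hi hj.
  have h1 := Q1 M hM i j hi hj; have h2 := Q1 N hN i j hi hj.
  rewrite /bv /dv !mxE in h; rewrite /bv /dv in h1 h2 *.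
  by apply: (lc3 (a:=1) (c:=-1) (e:=-1) h h1 h2); ring.
have Hspan : forall P1 : 'M[F]_m,
    (forall M, M \in S -> exists s t, ulsub M = s *: P1 + t *: delta_mx o o) ->
    (\dim (Pimg S) <= 2)%N.
  move=> P1 HP1.
  have sub : (Pimg S <= <<[:: P1; delta_mx o o]>>)%VS.
    apply/subvP => N /memv_imgP [M hM ->]; rewrite lfunE /=.
    have [s [t ->]] := HP1 M hM.
    by apply: memvD; apply: memvZ; apply: memv_span; rewrite !inE eqxx ?orbT.
  exact: leq_trans (dimvS sub) (dim_span _).
have Hex : exists M1 M2 (i0 j0 : 'I_m), [/\ M1 \in S, M2 \in S, (0 < i0)%N, (0 < j0)%N &
    (bv M1 i0 != 0) && (bv M1 i0 * bv M2 j0 - bv M1 j0 * bv M2 i0 != 0)].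
  apply: NNPP => hno.
  have Hall : forall M1 M2, M1 \in S -> M2 \in S -> forall i j : 'I_m, (0 < i)%N -> (0 < j)%N ->
      bv M1 i * bv M2 j = bv M1 j * bv M2 i.
    move=> M1 M2 hM1 hM2 i j hi hj.
    apply/eqP; rewrite -subr_eq0; apply/negPn/negP => hD; apply: hno.
    have [hb|hb] := eqVneq (bv M1 i) 0.
      exists M1, M2, j, i; split => //; apply/andP; split.
        by apply/eqP => hbj; move: hD; rewrite hb hbj !mul0r subrr eqxx.
      by rewrite -oppr_eq0 opprB.
    by exists M1, M2, i, j; split => //; rewrite hb hD.
  have : (\dim (Pimg S) <= 2)%N.
    case: (classic (exists M1, M1 \in S /\ exists2 k : 'I_m, (0 < k)%N & bv M1 k != 0))
      => [[M1 [hM1 [k hk hbk]]] | hnone].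
      apply: (Hspan (ulsub M1)) => M hM.
      exists (bv M k / bv M1 k), (M ord0 ord0 - bv M k / bv M1 k * M1 ord0 ord0).
      apply/matrixP => i j; rewrite !mxE -[widen_ord _ i]/(wd i) -[widen_ord _ j]/(wd j) !Ho.
      case: (posnP i) => hi; case: (posnP j) => hj.
      - rewrite !Hz //=; ring.
      - rewrite (Hz i hi) /=.
        apply: (lc1 (a := (bv M1 k)^-1) (Hall M M1 hM hM1 j k hj hk)).
        rewrite /bv; field; exact: hbk.
      - rewrite (Hz j hj) /= (Hsym M hM (wd i)) (Hsym M1 hM1 (wd i)).
        apply: (lc1 (a := (bv M1 k)^-1) (Hall M M1 hM hM1 i k hi hk)).
        rewrite /bv; field; exact: hbk.
      - rewrite (Hmid M hM i j hi hj) (Hmid M1 hM1 i j hi hj) /=; ring.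
    have hb0 : forall M, M \in S -> forall k : 'I_m, (0 < k)%N -> bv M k = 0.
      move=> M hM k hk; apply/eqP; apply/negPn/negP => hne; apply: hnone.
      by exists M; split => //; exists k.
    apply: (Hspan 0) => M hM.
    exists 0, (M ord0 ord0).
    apply/matrixP => i j; rewrite !mxE -[widen_ord _ i]/(wd i) -[widen_ord _ j]/(wd j) !Ho.
    case: (posnP i) => hi; case: (posnP j) => hj.
    - rewrite !Hz //=; ring.
    - rewrite (Hz i hi) /=.
      have := hb0 M hM j hj; rewrite /bv => ->; ring.
    - rewrite (Hz j hj) /= (Hsym M hM (wd i)).
      have := hb0 M hM i hi; rewrite /bv => ->; ring.
    - rewrite (Hmid M hM i j hi hj) /=; ring.
  by move=> h; move: hdim; rewrite ltnNge h.
have [M1 [M2 [i0 [j0 [hM1 hM2 hi0 hj0 /andP [hb1 hD]]]]]] := Hex.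
pose lam := dv M1 i0 / bv M1 i0.
have HA : forall t : 'I_m, (0 < t)%N -> dv M1 t = lam * bv M1 t.
  move=> t ht; apply: (lc1 (a := (bv M1 i0)^-1) (Q1 M1 hM1 i0 t hi0 ht)).
  by rewrite /lam; field; exact: hb1.
have HR : forall N, N \in S -> (forall t : 'I_m, (0 < t)%N -> dv N t = lam * bv N t) ->
    forall M, M \in S -> forall t s : 'I_m, (0 < t)%N -> (0 < s)%N ->
    bv N t * (dv M s - lam * bv M s) = bv N s * (dv M t - lam * bv M t).
  move=> N hN hNd M hM t s ht hs.
  have h := Q2 M N hM hN t s ht hs; rewrite (hNd s hs) (hNd t ht) in h.
  by apply: (lc1 (a := 1) h); ring.
have Kill : forall x : 'I_m -> F,
    (forall s : 'I_m, (0 < s)%N -> bv M1 i0 * x s = bv M1 s * x i0) ->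
    bv M2 i0 * x j0 = bv M2 j0 * x i0 -> forall s : 'I_m, (0 < s)%N -> x s = 0.
  move=> x h1 h2 s hs.
  have hx0 : x i0 = 0.
    have : (bv M1 i0 * bv M2 j0 - bv M1 j0 * bv M2 i0) * x i0 = 0.
      by apply: (lc2 (a := bv M2 i0) (c := - bv M1 i0) (h1 j0 hj0) h2); ring.
    by move/eqP; rewrite mulf_eq0 (negbTE hD) => /eqP.
  by have := h1 s hs; rewrite hx0 mulr0 => /eqP; rewrite mulf_eq0 (negbTE hb1) => /eqP.
have Hd2 : forall t : 'I_m, (0 < t)%N -> dv M2 t = lam * bv M2 t.
  move=> t ht; apply/eqP; rewrite -subr_eq0; apply/eqP.
  apply: (Kill (fun s => dv M2 s - lam * bv M2 s)) => // [s hs|].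
    exact: (HR M1 hM1 HA M2 hM2 i0 s hi0 hs).
  have h := Q1 M2 hM2 i0 j0 hi0 hj0.
  by apply: (lc1 (a := 1) h); rewrite /=; ring.
have Hd : forall M, M \in S -> forall t : 'I_m, (0 < t)%N -> dv M t = lam * bv M t.
  move=> M hM t ht; apply/eqP; rewrite -subr_eq0; apply/eqP.
  apply: (Kill (fun s => dv M s - lam * bv M s)) => // [s hs|].
    exact: (HR M1 hM1 HA M hM i0 s hi0 hs).
  exact: (HR M2 hM2 Hd2 M hM i0 j0 hi0 hj0).
have HE1 : forall M, M \in S -> bv M i0 != 0 ->
    M ord_max ord_max - lam * M ord0 ord_max - lam * M ord_max ord0
    + lam * lam * M ord0 ord0 = 0.
  move=> M hM hb.
  have := minor3 _ _ _ ord0 (wd i0) ord_max ord0 (wd i0) ord_max (hrk M hM).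
  rewrite (Hmid M hM i0 i0 hi0 hi0) (Hsym M hM (wd i0) ord0) (Hsym M hM (wd i0) ord_max).
  have := Hd M hM i0 hi0; rewrite /dv /bv => -> h.
  have : bv M i0 * bv M i0 * (M ord_max ord_max - lam * M ord0 ord_max
      - lam * M ord_max ord0 + lam * lam * M ord0 ord0) = 0.
    by apply: (eq0_by h); rewrite /bv; ring.
  by move/eqP; rewrite !mulf_eq0 (negbTE hb) /= => /eqP.
have HE : forall M, M \in S ->
    M ord_max ord_max - lam * M ord0 ord_max - lam * M ord_max ord0
    + lam * lam * M ord0 ord0 = 0.
  move=> M hM; have [hb|hb] := eqVneq (bv M i0) 0; last exact: HE1.
  have hb' : bv (M + M1) i0 != 0.
    by rewrite /bv mxE; rewrite /bv in hb; rewrite hb add0r.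
  have h := HE1 _ (memvD hM hM1) hb'; rewrite !mxE in h.
  by apply: (lc2 (a := 1) (c := -1) h (HE1 M1 hM1 hb1)); ring.
exists (1%:M - lam *: delta_mx ord_max ord0).
  by apply: unitQ; rewrite -val_eqE /= -lt0n.
move=> M hM; apply/andP; split.
  by rewrite /symmx !trmx_mul trmxK mulmxA (eqP (hsym M hM)).
apply/forallP => i; apply/forallP => j; apply/implyP => /andP [hi hj].
rewrite congr_entry; apply/eqP.
have [ei|ni] := eqVneq i ord_max; have [ej|nj] := eqVneq j ord_max.
- rewrite ei ej /=.
  by apply: (lc1 (a := 1) (HE M hM)); ring.
- rewrite ei /=.
  case: (Hsplit j nj) => j' ej'; subst j.
  by apply: (lc1 (a := 1) (Hd M hM j' hj)); rewrite /bv /dv; ring.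
- rewrite ej /=.
  case: (Hsplit i ni) => i' ei'; subst i.
  rewrite (Hsym M hM (wd i') ord_max) (Hsym M hM (wd i') ord0).
  by apply: (lc1 (a := 1) (Hd M hM i' hi)); rewrite /bv /dv; ring.
- rewrite /=.
  case: (Hsplit i ni) => i' ei'; subst i.
  case: (Hsplit j nj) => j' ej'; subst j.
  rewrite (Hmid M hM i' j' hi hj); ring.
Qed.
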